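(* Let $q$ be a prime power with $q\equiv1\pmod 4$ and let $P_q=\Gamma(\mathbb{F}_q,S)$ be the Paley graph, where $S$ is the set of nonzero quadratic residues in $\mathbb{F}_q$. Then $\Theta_{\mathrm{lin}}(P_q)=\sqrt q$. In particular, $\Theta_{\mathrm{lin}}(C_5)=\sqrt5$, where $C_5$ is the $5$-cycle (identified with $P_5$).
   Context: For a symmetric set $S\subseteq\mathbb{F}_q\setminus\{0\}$ ($S=-S$), the Cayley graph $\Gamma(\mathbb{F}_q,S)$ has vertex set $\mathbb{F}_q$, with $u\sim v$ iff $u-v\in S$. $G^k$ is the $k$-fold strong product: vertex set $\mathbb{F}_q^k$, distinct vertices adjacent iff in each coordinate they are equal or adjacent in $G$. $\alpha_{\mathrm{lin}}(G^k)$ is the largest size of an independent set of $G^k$ that is a linear subspace of $\mathbb{F}_q^k$, and the linear Shannon capacity is $\Theta_{\mathrm{lin}}(G)=\sup_k\alpha_{\mathrm{lin}}(G^k)^{1/k}$. *)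

(* Defs.v *)
From HB Require Import structures.
From mathcomp Require Import all_boot all_order all_algebra all_field.
From mathcomp Require Import all_classical all_reals.
From mathcomp Require Import exp.
Set Implicit Arguments. Unset Strict Implicit. Unset Printing Implicit Defensive.
Import Order.TTheory GRing.Theory Num.Theory.
Local Open Scope ring_scope.

(* Cayley graph Gamma(F, S) on the additive group of a finite field:
   u ~ v iff u - v \in S  (S is assumed symmetric, 0 \notin S). *)
Definition cayley_adj (F : finFieldType) (S : {set F}) (u v : F) : bool :=
  (u - v) \in S.

Definition strong_adj (F : finFieldType) (S : {set F}) (k : nat)
    (u v : 'rV[F]_k) : bool :=
  (u != v) && [forall i, (u 0 i == v 0 i) || cayley_adj S (u 0 i) (v 0 i)].

Definition indep (F : finFieldType) (S : {set F}) (k : nat)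
    (I : {set 'rV[F]_k}) : bool :=
  [forall u in I, forall v in I, ~~ strong_adj S u v].

Definition rowspace_set (F : finFieldType) (k : nat) (A : 'M[F]_k)
    : {set 'rV[F]_k} := [set v | (v <= A)%MS].

(* alpha_lin(G^k): largest size of an independent set which is a linear
   subspace of F^k (every subspace of F^k is the row space of some k x k
   matrix). *)
Definition alpha_lin (F : finFieldType) (S : {set F}) (k : nat) : nat :=
  \max_(A : 'M[F]_k | indep S (rowspace_set A)) #|rowspace_set A|.

Definition Theta_lin (R : realType) (F : finFieldType) (S : {set F}) : R :=
  sup [set x : R | exists k : nat, (0 < k)%N /\
         x = powR (alpha_lin S k)%:R (k%:R^-1)].

Definition quad_res (F : finFieldType) : {set F} :=
  [set x : F | (x != 0) && [exists y : F, y ^+ 2 == x]].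

Definition C5_set : {set 'F_5} := [set (1 : 'F_5); -1].

(* Main.v *)
Require Import Defs.
From HB Require Import structures.
From mathcomp Require Import all_boot all_order all_algebra all_field.
From mathcomp Require Import all_classical all_reals.
From mathcomp Require Import exp.
From mathcomp Require Import zify.
Import Order.TTheory GRing.Theory Num.Theory.
Local Open Scope ring_scope.
Set Implicit Arguments. Unset Strict Implicit. Unset Printing Implicit Defensive.
Lemma card_pow (F : finFieldType) : exists2 p, prime p & exists2 n, (0 < n)%N & (#|F| = p ^ n)%N /\ p%:R = 0 :> F.
Proof.
have [p pr pc] := finPcharP F.
have hc : #|F| = (p ^ logn p #|F|)%N := card_pprimeChar pc.
exists p => //; exists (logn p #|F|).
  move: hc; set n := logn _ _ => hc.
  have := finNzRing_gt1 F; rewrite hc; case: n {hc} => //=.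
by split => //; exact: pcharf0 pc.
Qed.

Lemma card_F0 (F : finFieldType) : #|F|%:R = 0 :> F.
Proof.
have [p pr [n n0 [hc hp]]] := card_pow F.
by rewrite hc natrX hp expr0n (gtn_eqF n0).
Qed.

Lemma sum_pow0 (F : finFieldType) (e : nat) : (e < #|F|.-1)%N ->
  \sum_(s : F) s ^+ e = 0.
Proof.
move=> he; case: e he => [|e] he.
  by under eq_bigr do rewrite expr0; rewrite sumr_const card_F0.
have [a a0 ae] : exists2 a : F, a != 0 & a ^+ e.+1 != 1.
  apply/exists_inP; apply: contraLR he; rewrite negb_exists_in => /forall_inP H.
  rewrite -leqNgt.
  have := @max_unity_roots F e.+1 [seq x <- enum F | x != 0] isT.
  have -> : size [seq x <- enum F | x != 0] = #|F|.-1.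
    rewrite -(cardC1 (0:F)) cardE /enum_mem !size_filter count_filter; by apply: eq_count => x; rewrite !inE andbT.
  move=> hh; apply: hh; last by rewrite filter_uniq ?enum_uniq.
  apply/allP => x; rewrite mem_filter => /andP[x0 _].
  by rewrite unity_rootE; have := H x x0; rewrite negbK.
have : \sum_(s : F) s ^+ e.+1 = a ^+ e.+1 * \sum_(s : F) s ^+ e.+1.
  rewrite mulr_sumr (reindex_inj (mulfI a0)) /=.
  by apply: eq_bigr => s _; rewrite exprMn.
move/eqP; rewrite -subr_eq0 -{1}[X in X - _]mul1r -mulrBl mulf_eq0 subr_eq0 eq_sym.
by rewrite (negbTE ae) => /eqP.
Qed.
Inductive lowdeg (F : finFieldType) (r n : nat) : ({ffun 'I_r -> F} -> F) -> Prop :=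
| LDmon (c : F) (e : 'I_r -> nat) : (\sum_i e i <= n)%N ->
    lowdeg n (fun t => c * \prod_i t i ^+ e i)
| LDadd f g : lowdeg n f -> lowdeg n g -> lowdeg n (fun t => f t + g t)
| LDext f g : lowdeg n f -> f =1 g -> lowdeg n g.

Lemma lowdeg_sum0 (F : finFieldType) r n (f : {ffun 'I_r -> F} -> F) :
  lowdeg n f -> (n < r * #|F|.-1)%N -> \sum_t f t = 0.
Proof.
move=> H hn; elim: H => {f} [c e he| f g _ Hf _ Hg| f g _ Hf efg].
- rewrite -mulr_sumr; apply/eqP; rewrite mulf_eq0; apply/orP; right; apply/eqP.
  rewrite -(bigA_distr_bigA (fun i (s : F) => s ^+ e i)) /=.
  have [i hi] : exists i, (e i < #|F|.-1)%N.
    apply/existsP; apply: contraLR hn; rewrite negb_exists => /forallP H.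
    rewrite -leqNgt; apply: leq_trans he.
    rewrite -[X in (X * _)%N]card_ord -sum_nat_const; apply: leq_sum => i _.
    by rewrite leqNgt H.
  by rewrite (bigD1 i) //= sum_pow0 // mul0r.
- by rewrite big_split /= Hf Hg addr0.
- by under eq_bigr do rewrite -efg.
Qed.

Lemma lowdeg_mono (F : finFieldType) r n m (f : {ffun 'I_r -> F} -> F) :
  (n <= m)%N -> lowdeg n f -> lowdeg m f.
Proof.
move=> nm; elim => {f} [c e he| f g _ Hf _ Hg| f g _ Hf efg].
- by apply: LDmon; apply: leq_trans nm.
- exact: LDadd.
- exact: LDext efg.
Qed.

Lemma lowdeg_mul (F : finFieldType) r a b (f g : {ffun 'I_r -> F} -> F) :
  lowdeg a f -> lowdeg b g -> lowdeg (a + b) (fun t => f t * g t).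
Proof.
move=> Hf; elim: Hf g => {f} [c e he| f1 f2 _ H1 _ H2| f1 f2 _ H1 e12] g Hg.
- elim: Hg => {g} [c' e' he'| g1 g2 _ G1 _ G2| g1 g2 _ G1 eg].
  + apply: (@LDext _ _ _ (fun t => (c * c') * \prod_i t i ^+ (e i + e' i))).
      by apply: LDmon; rewrite big_split /= leq_add.
    move=> t /=; rewrite mulrACA; congr (_ * _); rewrite -big_split /=.
    by apply: eq_bigr => i _; rewrite exprD.
  + apply: LDext (LDadd G1 G2) _ => t /=; by rewrite mulrDr.
  + by apply: LDext G1 _ => t /=; rewrite eg.
- apply: LDext (LDadd (H1 g Hg) (H2 g Hg)) _ => t /=; by rewrite mulrDl.
- by apply: LDext (H1 g Hg) _ => t /=; rewrite e12.
Qed.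

Lemma lowdeg_const (F : finFieldType) r n (c : F) : lowdeg (r:=r) n (fun _ => c).
Proof.
apply: (@LDext _ _ _ (fun t => c * \prod_i t i ^+ 0)).
  by apply: LDmon; rewrite big1.
by move=> t /=; rewrite big1 ?mulr1 // => i _; rewrite expr0.
Qed.

Lemma lowdeg_var (F : finFieldType) r (j : 'I_r) : lowdeg (F:=F) 1 (fun t => t j).
Proof.
apply: (@LDext _ _ _ (fun t => 1 * \prod_i t i ^+ (i == j))).
  by apply: LDmon; rewrite (bigD1 j) //= big1 ?eqxx // => i /negbTE ->.
move=> t /=; rewrite mul1r (bigD1 j) //= eqxx expr1 big1 ?mulr1 //.
by move=> i /negbTE ->; rewrite expr0.
Qed.

Lemma lowdeg_bigsum (F : finFieldType) r n (I : finType) (G : I -> {ffun 'I_r -> F} -> F) :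
  (forall i, lowdeg n (G i)) -> lowdeg n (fun t => \sum_i G i t).
Proof.
move=> H; elim: (index_enum I) => [|i s IH].
  by apply: LDext (lowdeg_const _ n 0) _ => t; rewrite big_nil.
by apply: LDext (LDadd (H i) IH) _ => t; rewrite big_cons.
Qed.

Lemma lowdeg_bigprod (F : finFieldType) r n (I : Type) (s : seq I) (P : pred I)
  (G : I -> {ffun 'I_r -> F} -> F) :
  (forall i, P i -> lowdeg n (G i)) ->
  lowdeg (count P s * n) (fun t => \prod_(i <- s | P i) G i t).
Proof.
move=> H; elim: s => [|i s IH].
  by apply: LDext (lowdeg_const _ _ 1) _ => t; rewrite big_nil.
rewrite /=; case Pi: (P i) => /=.
  by apply: LDext (lowdeg_mul (H i Pi) IH) _ => t; rewrite big_cons Pi.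
by apply: LDext IH _ => t; rewrite big_cons Pi.
Qed.
Definition nsq (F : finFieldType) : {set F} :=
  [set x : F | (x != 0) && (x \notin quad_res F)].

Lemma quad_resP (F : finFieldType) (x : F) :
  reflect (x != 0 /\ exists y, y ^+ 2 = x) (x \in quad_res F).
Proof.
rewrite inE; apply: (iffP andP) => [[x0 /existsP[y /eqP yx]]|[x0 [y yx]]].
  by split => //; exists y.
by split => //; apply/existsP; exists y; rewrite yx.
Qed.

Lemma card_split (F : finFieldType) :
  #|F|.-1 = (#|quad_res F| + #|nsq F|)%N.
Proof.
have -> : #|F|.-1 = #|[set x : F | x != 0]|.
  by rewrite -(cardC1 (0:F)); apply: eq_card => x; rewrite !inE.
rewrite -(cardsID (quad_res F) [set x : F | x != 0]).
have -> : [set x : F | x != 0] :&: quad_res F = quad_res F.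
  by apply/setP => x; rewrite !inE andb_idl // => /andP[].
have -> : [set x : F | x != 0] :\: quad_res F = nsq F.
  by apply/setP => x; rewrite !inE andbC.
by [].
Qed.

Lemma card_qr_ge (F : finFieldType) : (#|F|.-1 <= 2 * #|quad_res F|)%N.
Proof.
pose pr (s : F) := odflt 0 [pick z | z ^+ 2 == s].
pose f (y : F) := (y ^+ 2, y == pr (y ^+ 2)).
have inj : {in [set y : F | y != 0] &, injective f}.
  move=> y y' _ _ [e1 e2].
  have : (y == y') || (y == - y') by rewrite -eqf_sqr e1.
  case/orP => [/eqP//|/eqP yy'].
  move: e2; rewrite -e1.
  case: (eqVneq y (pr (y ^+ 2))) => [h|h]; case: (eqVneq y' (pr (y ^+ 2))) => [h'|h'] //=.
    by rewrite h h'.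
  have : (y == pr (y ^+ 2)) || (y == - pr (y ^+ 2)).
    rewrite -eqf_sqr /pr; case: pickP => [z /eqP -> //|/(_ y)]; by rewrite eqxx.
  have : (y' == pr (y ^+ 2)) || (y' == - pr (y ^+ 2)).
    rewrite -eqf_sqr /pr e1; case: pickP => [z /eqP -> //|/(_ y')]; by rewrite eqxx.
  rewrite (negbTE h) (negbTE h') /= => /eqP b /eqP a _; exact: etrans a (esym b).
have -> : #|F|.-1 = #|[set x : F | x != 0]|.
  by rewrite -(cardC1 (0:F)); apply: eq_card => x; rewrite !inE.
rewrite -(card_in_imset inj).
have sub : f @: [set y : F | y != 0] \subset finset.setX (quad_res F) [set: bool].
  apply/fintype.subsetP => z /imsetP[y]; rewrite inE => y0 ->.
  rewrite finset.in_setX finset.in_setT andbT; apply/quad_resP; split; [by rewrite expf_eq0 | by exists y].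
by have := subset_leq_card sub; rewrite cardsX cardsT card_bool mulnC.
Qed.

Lemma card_nsq (F : finFieldType) : (2 * #|nsq F| <= #|F|.-1)%N.
Proof. have := card_qr_ge F; have := card_split F; lia. Qed.

Lemma nsq_nonempty (F : finFieldType) : 2%:R != 0 :> F -> (0 < #|nsq F|)%N.
Proof.
move=> h2.
have H2 : (#|[set y ^+ 2 | y in F]| < #|F|)%N.
  rewrite ltn_neqAle; apply/andP; split; last exact: leq_imset_card.
  apply/negP => /imset_injP H.
  have : (1 : F) = -1 by apply: H; rewrite ?inE // sqrrN.
  move/eqP; rewrite -subr_eq0 opprK; by rewrite (negbTE h2).
have H1 : (#|quad_res F| <= #|[set y ^+ 2 | y in F] :\ (0%R : F)|)%N.
  apply: subset_leq_card; apply/fintype.subsetP => x /quad_resP [x0 [y yx]].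
  by rewrite !inE x0 /=; apply/imsetP; exists y.
have E : #|[set y ^+ 2 | y in F]| = (#|[set y ^+ 2 | y in F] :\ (0%R : F)|).+1.
  rewrite (cardsD1 (0:F)) (_ : (0:F) \in _ = true) //.
  by apply/imsetP; exists 0; rewrite ?expr0n.
move: H1 H2 E; set img := [set _ | _ in _]; move=> H1 H2 E.
have := card_split F; have := finNzRing_gt1 F; lia.
Qed.
Lemma card_rowspace (F : finFieldType) k (A : 'M[F]_k) :
  #|rowspace_set A| = (#|F| ^ \rank A)%N.
Proof.
have -> : rowspace_set A = [set t *m row_base A | t : 'rV[F]_(\rank A)].
  apply/setP => v; rewrite inE; apply/idP/imsetP.
    by rewrite -(eq_row_base A) => /submxP [D ->]; exists D.
  by move=> [t _ ->]; apply: (submx_trans (submxMl t (row_base A))); rewrite eq_row_base.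
rewrite card_imset; last exact: row_free_inj (row_base_free A).
by rewrite card_mx mul1n.
Qed.

Lemma indep_wit (F : finFieldType) k (A : 'M[F]_k) (w : 'rV[F]_k) :
  indep (quad_res F) (rowspace_set A) -> (w <= A)%MS -> w != 0 ->
  exists i, w 0 i \in nsq F.
Proof.
move=> /forall_inP H wA w0.
have := forall_inP (H w _) 0; rewrite !inE wA sub0mx => /(_ isT isT).
rewrite /strong_adj w0 /= negb_forall => /existsP [i].
rewrite negb_or /cayley_adj !mxE subr0 => /andP[a b].
by exists i; rewrite inE a b.
Qed.
Lemma count_card (T : finType) (A : {set T}) : count (mem A) (index_enum T) = #|A|.
Proof. by rewrite cardE /enum_mem size_filter /index_enum unlock. Qed.
Lemma count_ord k : count predT (index_enum 'I_k) = k.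
Proof. by rewrite -sum1_count sum1_card card_ord. Qed.
Lemma rank_bound (F : finFieldType) k (A : 'M[F]_k) :
  2%:R != 0 :> F ->
  indep (quad_res F) (rowspace_set A) -> (2 * \rank A <= k)%N.
Proof.
move=> h2 HI; rewrite leqNgt; apply/negP => hk.
move: hk; set r := \rank A => hk; set B := row_base A.
pose G (t : {ffun 'I_r -> F}) :=
  \prod_(i < k) \prod_(n in nsq F) (\sum_j t j * B j i - n).
have Lin : forall i : 'I_k, predT i -> lowdeg (count (mem (nsq F)) (index_enum F) * 1)
   (fun t : {ffun 'I_r -> F} => \prod_(n in nsq F) (\sum_j t j * B j i - n)).
  move=> i _; apply: lowdeg_bigprod => n _.
  apply: LDext (LDadd (lowdeg_bigsum (fun j => lowdeg_mul (lowdeg_var _ j) (lowdeg_const _ 0 (B j i))))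
      (lowdeg_const _ 1 (- n))) _ => t /=.
  by [].
have LG := lowdeg_bigprod (index_enum 'I_k) Lin.
rewrite count_ord count_card muln1 in LG.
have S0 : \sum_t G t = 0.
  apply: (lowdeg_sum0 LG).
  have := card_nsq F; have : (0 < #|F|.-1)%N by rewrite -(cardC1 (0:F)); apply/card_gt0P; exists 1; rewrite !inE oner_eq0.
  move: (#|F|.-1) (#|nsq F|) => q1 N h1 h2'.
  have h3 : (k * N <= (2 * r).-1 * N)%N by rewrite leq_mul2r -ltnS prednK ?hk ?orbT //; lia.
  have h4 : ((2 * r).-1 * N < r * q1)%N.
    case: N h3 h2' => [|N] h3 h2'; first by rewrite muln0 muln_gt0 h1 andbT; lia.
    nia.
  lia.
have t0P : forall t : {ffun 'I_r -> F}, t != [ffun => 0] -> G t = 0.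
  move=> t tn0.
  pose w := (\row_j t j) *m B.
  have wE : forall i, w 0 i = \sum_j t j * B j i.
    by move=> i; rewrite !mxE; apply: eq_bigr => j _; rewrite mxE.
  have wA : (w <= A)%MS.
    by apply: (submx_trans (submxMl _ B)); rewrite eq_row_base.
  have w0 : w != 0.
    apply: contra tn0 => /eqP w0; apply/eqP/ffunP => j.
    have : \row_j t j = 0 :> 'rV_r.
      by apply: (row_free_inj (row_base_free A)); rewrite mul0mx.
    by move/rowP/(_ j); rewrite !mxE ffunE.
  have [i wi] := indep_wit HI wA w0.
  rewrite /G (bigD1 i) //= (bigD1 (w 0 i)) //= -wE subrr mul0r mul0r //.
rewrite (bigD1 [ffun => 0]) //= big1 ?addr0 in S0; last by move=> t /t0P.
move: S0; apply/eqP; rewrite /G prodf_seq_neq0; apply/allP => i _ /=.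
rewrite prodf_seq_neq0; apply/allP => n _; apply/implyP; rewrite inE => /andP[n0 _].
rewrite big1 ?sub0r ?oppr_eq0 // => j _; by rewrite ffunE mul0r.
Qed.
Lemma alpha_sq (F : finFieldType) k : 2%:R != 0 :> F ->
  (alpha_lin (quad_res F) k ^ 2 <= #|F| ^ k)%N.
Proof.
move=> h2; rewrite /alpha_lin.
elim/big_ind: _ => [|x y hx hy|A HA]; first by rewrite exp0n // expn_gt0 card_gt0; apply/card_gt0P; exists 0.
  by rewrite /maxn; case: ifP.
rewrite (card_rowspace A) -expnM mulnC leq_pexp2l ?rank_bound //.
by apply/card_gt0P; exists 0.
Qed.

Lemma alpha2 (F : finFieldType) : 2%:R != 0 :> F ->
  (#|F| <= alpha_lin (quad_res F) 2)%N.
Proof.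
move=> h2; have := nsq_nonempty h2; rewrite card_gt0 => /set0Pn [a].
rewrite inE => /andP[a0 aq].
pose u : 'rV[F]_2 := \row_j (if j == 0 then 1 else a).
pose A2 : 'M[F]_2 := \matrix_(i, j) u 0 j.
have Vlin : forall v : 'rV[F]_2, (v <= A2)%MS -> v 0 1 = a * v 0 0.
  move=> v /submxP [D ->]; rewrite !mxE mulr_sumr; apply: eq_bigr => i _.
  by rewrite !mxE /= mulr1 mulrC.
have HI : indep (quad_res F) (rowspace_set A2).
  apply/forall_inP => x; rewrite inE => xA; apply/forall_inP => y; rewrite inE => yA.
  rewrite /strong_adj negb_and negbK orbC -implybE; apply/implyP => /forallP H.
  have e1 := Vlin _ xA; have e2 := Vlin _ yA.
  have := H 0; have := H 1; rewrite /cayley_adj e1 e2 -mulrBr.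
  case: (eqVneq (x 0 0) (y 0 0)) => [e _ _|d0 /= ].
    apply/eqP/rowP => j; case: j => [[|[|j]] //] jlt.
      by rewrite (_ : Ordinal jlt = 0) //; apply: val_inj.
    by rewrite (_ : Ordinal jlt = 1) ?e1 ?e2 ?e //; apply: val_inj.
  have d0' : x 0 0 - y 0 0 != 0 by rewrite subr_eq0.
  rewrite (inj_eq (mulfI a0)) (negbTE d0) /=.
  move=> /quad_resP [_ [z hz]] /quad_resP [_ [w hw]].
  suff : a \in quad_res F by rewrite (negbTE aq).
  apply/quad_resP; split => //.
  have w0 : w != 0 by apply: contra d0' => /eqP w0; rewrite -hw w0 expr0n.
  by exists (z / w); rewrite expr_div_n hz hw mulfK.
apply: leq_trans (leq_bigmax_cond A2 HI).
have inj : injective (fun s : F => s *: u).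
  by move=> s s' /rowP /(_ 0); rewrite !mxE /= !mulr1.
rewrite -(card_imset _ inj); apply: subset_leq_card.
apply/fintype.subsetP => _ /imsetP [s _ ->]; rewrite inE; apply: scalemx_sub.
have -> : u = row 0 A2 by apply/rowP => j; rewrite !mxE.
exact: row_sub.
Qed.
Lemma two_neq0 (F : finFieldType) : (#|F| %% 4 = 1)%N -> 2%:R != 0 :> F.
Proof.
move=> h4; apply/negP => /eqP h2.
have [p pr [n n0 [hc hp]]] := card_pow F.
have pc : p \in [pchar F] by rewrite inE pr hp eqxx.
have : (p %| 2)%N by rewrite (dvdn_pcharf pc) h2.
rewrite dvdn_prime2 // => /eqP p2.
have : (2 %| #|F|)%N by rewrite hc -p2 dvdn_exp.
move: h4; lia.
Qed.

Lemma pow_bound (R : realType) (a q k : nat) : (0 < k)%N -> (a ^ 2 <= q ^ k)%N ->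
  powR (a%:R : R) (k%:R^-1) <= Num.sqrt (q%:R).
Proof.
move=> k0 haq; set y := powR _ _.
have yk : y ^+ k = a%:R.
  rewrite /y -powR_mulrn ?powR_ge0 // -powRrM mulVf ?powRr1 //.
  by rewrite pnatr_eq0 -lt0n.
rewrite leNgt; apply/negP => hlt.
have := ltrXn2r (2 * k) (sqrtr_ge0 _) hlt; rewrite muln_eq0 /= -lt0n k0 => H.
move: H; rewrite exprM sqr_sqrtr ?ler0n // mulnC exprM yk -natrX -natrX ltr_nat.
by rewrite ltnNge haq.
Qed.
Lemma theta_qr (R : realType) (F : finFieldType) : (#|F| %% 4 = 1)%N ->
  Theta_lin R (quad_res F) = Num.sqrt (#|F|%:R).
Proof.
move=> h4; have h2 := two_neq0 h4.
rewrite /Theta_lin; match goal with |- sup ?X = _ => set E := X end.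
have ub : ubound E (Num.sqrt (#|F|%:R)).
  move=> x [k [k0 ->]]; apply: pow_bound => //; exact: alpha_sq.
have inE2 : E (Num.sqrt (#|F|%:R)).
  exists 2%N; split => //.
  have ha : alpha_lin (quad_res F) 2 = #|F|.
    apply/eqP; rewrite eqn_leq alpha2 // andbT.
    have := alpha_sq 2 h2; rewrite leq_exp2r //.
  by rewrite ha powR12_sqrt ?ler0n.
apply/eqP; rewrite eq_le ge_sup //=; last by exists (Num.sqrt (#|F|%:R)).
by apply: sup_upper_bound => //; split; [exists (Num.sqrt (#|F|%:R)) | exists (Num.sqrt (#|F|%:R))].
Qed.

Theorem mainTheorem5 (R : realType) :
  (forall F : finFieldType, (#|F| %% 4 = 1)%N ->
     Theta_lin R (quad_res F) = Num.sqrt (#|F|%:R)) /\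
  Theta_lin R C5_set = Num.sqrt 5.
Proof.
split; first by move=> F; exact: theta_qr.
have -> : C5_set = quad_res 'F_5.
  apply/setP => x; apply/idP/idP.
    move=> hx; apply/quad_resP; move: hx; rewrite /C5_set !inE => /orP[] /eqP ->; split => //.
      by exists 1; rewrite expr1n.
    by exists (inZp 2); apply/eqP.
  move/quad_resP => [x0 [y yx]]; rewrite /C5_set !inE -yx; move: x0; rewrite -yx.
  by case: y {yx} => [[|[|[|[|[|]]]]] ?].
by rewrite theta_qr card_Fp.
Qed.
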